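(* For a greedy policy, for every $n\ge1$ and every real $0\le x\le n$, $$\Gamma_{\mathbf R}[\lceil x\rceil]<\Gamma_{\mathbf S}[n-\lceil x\rceil]-\gamma\ \Longrightarrow\ R_{\mathbf G}(n)>x\ \Longrightarrow\ \Gamma_{\mathbf R}[\lfloor x\rfloor]\le\Gamma_{\mathbf S}[n-\lfloor x\rfloor]+\gamma.$$
   Context: Let $(r_i)_{i\ge1}$, $(s_i)_{i\ge1}$ be probability vectors on the positive integers with $\mu:=\sum_i r_is_i>0$, and $\gamma:=\sup_i r_i\vee\sup_i s_i$. Let $\{L_{\mathbf R}(n)\}_{n\ge1}$, $\{L_{\mathbf S}(n)\}_{n\ge1}$ be independent i.i.d. sequences with $\Pr(L_{\mathbf R}(1)=i)=r_i$, $\Pr(L_{\mathbf S}(1)=i)=s_i$. Put $X_{\mathbf R}(n)=s_{L_{\mathbf R}(n)}$, $X_{\mathbf S}(n)=r_{L_{\mathbf S}(n)}$, and $\Gamma_{\mathbf R}[m]=\sum_{j=1}^mX_{\mathbf R}(j)$, $\Gamma_{\mathbf S}[m]=\sum_{j=1}^mX_{\mathbf S}(j)$ (with $\Gamma[0]=0$). A reading policy is a $\{0,1\}$-valued process $C(n)$ ($C(n)=1$ iff the $n$-th record is read from $\mathbf R$), $R(n)=\sum_{j\le n}C(j)$, $S(n)=n-R(n)$, with $C(n)$ being $\mathcal F_{n-1}$-measurable where $\mathcal F_n=\mathcal F_0\vee\sigma(L_{\mathbf R}(1),\dots,L_{\mathbf R}(R(n));L_{\mathbf S}(1),\dots,L_{\mathbf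 S}(S(n)))$ and $\mathcal F_0$ (randomization) is independent of the labels. A greedy policy satisfies, for $n\ge1$, $C(n+1)=1$ if $\Gamma_{\mathbf S}[S(n)]>\Gamma_{\mathbf R}[R(n)]$ and $C(n+1)=0$ if $\Gamma_{\mathbf S}[S(n)]<\Gamma_{\mathbf R}[R(n)]$ (ties arbitrary); $R_{\mathbf G}(n)$ is its $R(n)$. *)

(* Defs.v *)
From Stdlib Require Import Reals Lra Lia ZArith.
Open Scope R_scope.

(* A probability vector on the positive integers {1,2,...}, represented as
   p : nat -> R where only the values p i for i >= 1 are meaningful. *)
Definition prob_vector (p : nat -> R) : Prop :=
  (forall i : nat, (1 <= i)%nat -> 0 <= p i) /\
  infinite_sum (fun k => p (S k)) 1.

Definition is_mu (r s : nat -> R) (mu : R) : Prop :=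
  infinite_sum (fun k => r (S k) * s (S k)) mu.

Definition is_gamma (r s : nat -> R) (g : R) : Prop :=
  is_lub (fun y => exists i : nat, (1 <= i)%nat /\ (y = r i \/ y = s i)) g.

Fixpoint Gam (X : nat -> R) (m : nat) : R :=
  match m with
  | O => 0
  | S k => Gam X k + X (S k)
  end.

Definition GammaR (s : nat -> R) (LR : nat -> nat) (m : nat) : R :=
  Gam (fun j => s (LR j)) m.
Definition GammaS (r : nat -> R) (LS : nat -> nat) (m : nat) : R :=
  Gam (fun j => r (LS j)) m.

Fixpoint Rcount (C : nat -> bool) (n : nat) : nat :=
  match n with
  | O => O
  | S k => (Rcount C k + (if C (S k) then 1 else 0))%nat
  end.
Definition Scount (C : nat -> bool) (n : nat) : nat := (n - Rcount C n)%nat.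

(* Greedy policy rule, for n >= 1 (ties arbitrary, C(1) arbitrary). *)
Definition greedy (r s : nat -> R) (LR LS : nat -> nat) (C : nat -> bool) : Prop :=
  forall n : nat, (1 <= n)%nat ->
    (GammaS r LS (Scount C n) > GammaR s LR (Rcount C n) -> C (S n) = true) /\
    (GammaS r LS (Scount C n) < GammaR s LR (Rcount C n) -> C (S n) = false).

Definition nfloor (x : R) : nat := Z.to_nat (Int_part x).
Definition nceil (x : R) : nat := Z.to_nat (- Int_part (- x)).

(* Main.v *)
Require Import Defs.
From Stdlib Require Import Reals Lra Lia ZArith.
Open Scope R_scope.

Lemma Rcount_le C n : (Rcount C n <= n)%nat.
Proof. induction n; simpl; [lia|destruct (C (S n)); lia]. Qed.

Lemma Rcount_mono C m n : (m <= n)%nat -> (Rcount C m <= Rcount C n)%nat.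
Proof. induction 1; simpl; [lia|destruct (C (S m0)); lia]. Qed.

Lemma Scount_S C m : Scount C (S m) = (Scount C m + (if C (S m) then 0 else 1))%nat.
Proof.
  unfold Scount. pose proof (Rcount_le C m). change (Rcount C (S m)) with
  (Rcount C m + (if C (S m) then 1 else 0))%nat. destruct (C (S m)); lia.
Qed.

Lemma findR C k n : (k < Rcount C n)%nat ->
  exists m, (m < n)%nat /\ C (S m) = true /\ Rcount C m = k.
Proof.
  induction n; simpl; intros H; [lia|].
  destruct (Nat.lt_ge_cases k (Rcount C n)) as [H1|H1].
  - destruct (IHn H1) as [m [? [? ?]]]. exists m; repeat split; auto; lia.
  - exists n. destruct (C (S n)) eqn:E; [repeat split; auto; lia| lia].
Qed.

Lemma findS C j n : (j < Scount C n)%nat ->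
  exists m, (m < n)%nat /\ C (S m) = false /\ Scount C m = j.
Proof.
  induction n; intros H; [unfold Scount in H; simpl in H; lia|].
  rewrite Scount_S in H.
  destruct (Nat.lt_ge_cases j (Scount C n)) as [H1|H1].
  - destruct (IHn H1) as [m [? [? ?]]]. exists m; repeat split; auto; lia.
  - exists n. destruct (C (S n)) eqn:E; [lia|repeat split; auto; lia].
Qed.

Lemma Gam_nonneg X m : (forall j, 0 <= X j) -> 0 <= Gam X m.
Proof. intros H; induction m; simpl; [lra|specialize (H (S m)); lra]. Qed.

Lemma Gam_mono X a b : (forall j, 0 <= X j) -> (a <= b)%nat -> Gam X a <= Gam X b.
Proof. intros H; induction 1; simpl; [lra|specialize (H (S m)); lra]. Qed.

Lemma INR_Z_to_nat z : (0 <= z)%Z -> INR (Z.to_nat z) = IZR z.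
Proof. intros H. rewrite INR_IZR_INZ, Z2Nat.id; auto. Qed.

Theorem lemma3p1 (r s : nat -> R) (mu gamma : R)
  (hr : prob_vector r) (hs : prob_vector s)
  (hmu : is_mu r s mu) (hmupos : 0 < mu)
  (hgamma : is_gamma r s gamma)
  (LR LS : nat -> nat)
  (hLR : forall n, (1 <= LR n)%nat) (hLS : forall n, (1 <= LS n)%nat)
  (C : nat -> bool) (hC : greedy r s LR LS C) :
  forall (n : nat) (x : R), (1 <= n)%nat -> 0 <= x -> x <= INR n ->
    (GammaR s LR (nceil x) < GammaS r LS (n - nceil x) - gamma ->
       INR (Rcount C n) > x) /\
    (INR (Rcount C n) > x ->
       GammaR s LR (nfloor x) <= GammaS r LS (n - nfloor x) + gamma).
Proof.
  intros n x Hn Hx Hxn.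
  destruct hr as [hr0 _]. destruct hs as [hs0 _].
  destruct hgamma as [hub _].
  assert (XR0 : forall j, 0 <= s (LR j)) by (intros; apply hs0; auto).
  assert (XS0 : forall j, 0 <= r (LS j)) by (intros; apply hr0; auto).
  assert (XSg : forall j, r (LS j) <= gamma)
    by (intros j; apply hub; exists (LS j); split; auto).
  assert (g0 : 0 <= gamma) by (specialize (XS0 O); specialize (XSg O); lra).
  assert (GF : forall m, C (S m) = false ->
     GammaS r LS (Scount C m) <= GammaR s LR (Rcount C m)).
  { intros m Hm. destruct m.
    - unfold Scount; simpl. unfold GammaS, GammaR; simpl; lra.
    - destruct (hC (S m)) as [h1 _]; [lia|].
      destruct (Rle_dec (GammaS r LS (Scount C (S m))) (GammaR s LR (Rcount C (S m))))
        as [|h]; auto.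
      rewrite h1 in Hm; [discriminate|lra]. }
  assert (GT : forall m, C (S m) = true ->
     GammaR s LR (Rcount C m) <= GammaS r LS (Scount C m)).
  { intros m Hm. destruct m.
    - unfold Scount; simpl. unfold GammaS, GammaR; simpl; lra.
    - destruct (hC (S m)) as [_ h1]; [lia|].
      destruct (Rle_dec (GammaR s LR (Rcount C (S m))) (GammaS r LS (Scount C (S m))))
        as [|h]; auto.
      rewrite h1 in Hm; [discriminate|lra]. }
  pose proof (base_Int_part x) as [Fx1 Fx2].
  pose proof (base_Int_part (- x)) as [Cx1 Cx2].
  assert (Ip0 : (0 <= Int_part x)%Z).
  { assert (IZR (-1) < IZR (Int_part x)) by lra. apply lt_IZR in H. lia. }
  assert (Ic0 : (0 <= - Int_part (- x))%Z).
  { apply le_IZR. rewrite opp_IZR. lra. }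
  assert (Fl : INR (nfloor x) = IZR (Int_part x)) by (apply INR_Z_to_nat; auto).
  assert (Ce : INR (nceil x) = - IZR (Int_part (- x)))
    by (unfold nceil; rewrite INR_Z_to_nat, opp_IZR; auto).
  split.
  - intros H.
    set (k := nceil x) in *.
    assert (Hk : (k <= n)%nat).
    { apply INR_le. rewrite Ce. assert (INR n = IZR (Z.of_nat n)) by apply INR_IZR_INZ.
      assert (- IZR (Int_part (- x)) < INR n + 1) by lra.
      rewrite H0 in H1 |- *. rewrite <- opp_IZR in H1 |- *.
      rewrite <- plus_IZR in H1. apply lt_IZR in H1. apply IZR_le. lia. }
    destruct (Nat.lt_ge_cases k (Rcount C n)) as [Hlt|Hge].
    + apply lt_INR in Hlt. lra.
    + exfalso.
      destruct (n - k)%nat as [|j] eqn:Ej.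
      * unfold GammaS in H; simpl in H.
        pose proof (Gam_nonneg _ k XR0). unfold GammaR in H. lra.
      * assert (Hs : (j < Scount C n)%nat) by (unfold Scount; lia).
        destruct (findS C j n Hs) as [m [Hm1 [Hm2 Hm3]]].
        pose proof (GF m Hm2) as G. rewrite Hm3 in G.
        assert (Rcount C m <= k)%nat by (pose proof (Rcount_mono C m n); lia).
        pose proof (Gam_mono _ _ _ XR0 H0).
        unfold GammaS, GammaR in *. simpl in H. specialize (XSg (S j)). lra.
  - intros H.
    set (k := nfloor x) in *.
    assert (Hk : (k < Rcount C n)%nat).
    { apply INR_lt. rewrite Fl.
      assert (INR (Rcount C n) = IZR (Z.of_nat (Rcount C n))) by apply INR_IZR_INZ.
      rewrite H0 in H |- *. apply IZR_lt. assert (IZR (Int_part x) < IZR (Z.of_nat (Rcount C n))) by lra.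
      apply lt_IZR in H1. lia. }
    destruct (findR C k n Hk) as [m [Hm1 [Hm2 Hm3]]].
    pose proof (GT m Hm2) as G. rewrite Hm3 in G.
    assert (Scount C m <= n - k)%nat.
    { unfold Scount. pose proof (Rcount_mono C m n). pose proof (Rcount_le C n). lia. }
    pose proof (Gam_mono _ _ _ XS0 H0).
    unfold GammaS, GammaR in *. lra.
Qed.
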